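(* Let $I$ be a finite set of positive integers and $m=\max(I\cup\{0\})$. Then, as polynomials in $n$, $$d(I;n)=\sum_{k=0}^{m} a_k(I)\binom{n-m}{k},$$ where $a_0(I)=0$ and, for $1\le k\le m$, $a_k(I)$ is the number of permutations $\pi\in\mathfrak S_{2m}$ with $\mathrm{Des}\,\pi=I$ such that $\{\pi_1,\dots,\pi_m\}\cap[m+1,2m]=[m+1,m+k]$. Moreover $a_k(I)>0$ for all $1\le k\le m$.
   Context: For integers $a\le b$, $[a,b]=\{a,a+1,\dots,b\}$. For a permutation $\pi=\pi_1\cdots\pi_n$ of $[n]$, $\mathrm{Des}\,\pi=\{i\mid \pi_i>\pi_{i+1}\}$. For $n>m$, $d(I;n)=\#\{\pi\in\mathfrak S_n\mid \mathrm{Des}\,\pi=I\}$; this is a polynomial in $n$ of degree $m$, and the identity is an identity of polynomials (equivalently, it holds for all integers $n>m$). *)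

(* Defs.v *)
From HB Require Import structures.
From mathcomp Require Import all_boot all_order all_algebra all_fingroup.
Set Implicit Arguments. Unset Strict Implicit. Unset Printing Implicit Defensive.

(* 0-indexed value of the permutation at 0-indexed position j (0 if j >= n). *)
Definition pval n (s : 'S_n) (j : nat) : nat :=
  match insub j with Some k => val (s k) | None => 0 end.

(* Paper's one-line notation: pi s j = pi_j for 1 <= j <= n, values in [1,n]. *)
Definition pi n (s : 'S_n) (j : nat) : nat := (pval s j.-1).+1.

Definition Des n (s : 'S_n) : seq nat :=
  [seq i <- iota 1 n.-1 | pi s i.+1 < pi s i].

Definition DesEq n (s : 'S_n) (I : seq nat) : bool :=
  all (fun i => i \in I) (Des s) && all (fun i => i \in Des s) I.

Definition d (I : seq nat) (n : nat) : nat := #|[set s : 'S_n | DesEq s I]|.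

Definition maxI (I : seq nat) : nat := \max_(i <- I) i.

Definition a (I : seq nat) (k : nat) : nat :=
  let m := maxI I in
  #|[set s : 'S_(m + m) | DesEq s I &&
      all (fun v => (v \in [seq pi s j | j <- iota 1 m]) == (v \in iota m.+1 k))
          (iota m.+1 m)]|.

(* Main.v *)
Require Import Defs.
From HB Require Import structures.
From mathcomp Require Import all_boot all_order all_algebra all_fingroup zify.
Set Implicit Arguments. Unset Strict Implicit. Unset Printing Implicit Defensive.

Lemma card_count (T : finType) (Q : pred T) : #|[set x | Q x]| = count Q (enum T).
Proof. rewrite cardsE cardE -size_filter. congr size. rewrite /enum_mem -filter_predI. apply: eq_filter => x. by rewrite /= andbT. Qed.
Lemma count_bij (T1 T2 : eqType) (s : seq T1) (t : seq T2) (P : pred T1) (Q : pred T2)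
  (f : T1 -> T2) (g : T2 -> T1) :
  uniq s -> uniq t ->
  (forall x, x \in s -> P x -> [/\ f x \in t, Q (f x) & g (f x) = x]) ->
  (forall y, y \in t -> Q y -> [/\ g y \in s, P (g y) & f (g y) = y]) ->
  count P s = count Q t.
Proof.
move=> us ut H1 H2; rewrite -!size_filter -(size_map f).
apply: perm_size; apply: uniq_perm.
- rewrite map_inj_in_uniq ?filter_uniq // => x y.
  rewrite !mem_filter => /andP[Px xs] /andP[Py ys] e.
  by have [_ _ <-] := H1 _ xs Px; have [_ _ <-] := H1 _ ys Py; rewrite e.
- exact: filter_uniq.
move=> y; apply/idP/idP.
- case/mapP=> x; rewrite mem_filter => /andP[Px xs] ->.
  by have [ft Qf _] := H1 _ xs Px; rewrite mem_filter Qf ft.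
rewrite mem_filter => /andP[Qy yt]; have [gs Pg fg] := H2 _ yt Qy.
by apply/mapP; exists (g y); rewrite ?fg // mem_filter Pg gs.
Qed.

Lemma count_sumE (T : Type) (a : pred T) (s : seq T) : count a s = \sum_(x <- s) a x.
Proof. by elim: s => [|x s IH]; rewrite ?big_nil ?big_cons //= IH. Qed.

Fixpoint subs (s : seq nat) : seq (seq nat) :=
  if s is x :: s' then [seq x :: t | t <- subs s'] ++ subs s' else [:: [::]].

Lemma nil_subs s : [::] \in subs s.
Proof. by elim: s => [|x s IH] //=; rewrite mem_cat IH orbT. Qed.

Lemma mem_subs s t : (t \in subs s) = subseq t s.
Proof.
elim: s t => [|x s IH] t /=; first by rewrite inE; case: t.
rewrite mem_cat; case: t => [|y t]; first by rewrite nil_subs orbT.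
case: ifP => [/eqP ->|nyx].
- apply/orP/idP => [[/mapP[t' Ht' [->]]|]|]; first by rewrite -IH.
  + rewrite IH => /(subseq_trans _); apply; exact: subseq_cons.
  + by rewrite -IH => H; left; apply/mapP; exists t.
- rewrite IH; apply/orP/idP => [[/mapP[t' _ [e]]|//]|]; last by right.
  by rewrite e eqxx in nyx.
Qed.

Lemma subs_uniq s : uniq s -> uniq (subs s).
Proof.
elim: s => [|x s IH] //= /andP[xs us]; rewrite cat_uniq IH // andbT.
rewrite map_inj_uniq ?IH //=; last by move=> t1 t2 [].
apply/hasPn => t /= ts; apply/mapP => [[t' _ e]]; move: ts.
rewrite e mem_subs => /mem_subseq H; by rewrite H ?inE ?eqxx in xs.
Qed.

Lemma count_subs s k : count (fun t => size t == k) (subs s) = 'C(size s, k).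
Proof.
elim: s k => [|x s IH] k /=; first by rewrite bin0n; case: k.
rewrite count_cat count_map; case: k => [|k].
  by rewrite bin0 (_ : count _ _ = 0) ?add0n ?IH ?bin0 //; apply/eqP; rewrite -leqn0 leqNgt -has_count; apply/hasPn.
rewrite binS addnC; congr (_ + _); last exact: IH.
by rewrite -IH; apply: eq_count => t /=.
Qed.

Notation pv := Defs.pval.
Definition lw n (s : 'S_n) : seq nat := mkseq (pv s) n.

Lemma pvalE n (s : 'S_n) (i : 'I_n) : pv s i = val (s i).
Proof. by rewrite /pv; case: insubP => [k _ /val_inj -> //|]; rewrite ltn_ord. Qed.

Lemma pval_nth n (s : 'S_n) j : pv s j = nth 0 (lw s) j.
Proof.
case: (ltnP j n) => hj; first by rewrite nth_mkseq.
rewrite nth_default ?size_mkseq // /Defs.pval; by case: insubP => [k hk _|//]; rewrite ltnNge hj in hk.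
Qed.

Lemma size_lw n (s : 'S_n) : size (lw s) = n.
Proof. exact: size_mkseq. Qed.

Definition perms n := permutations (iota 0 n).

Lemma lw_perm n (s : 'S_n) : lw s \in perms n.
Proof.
rewrite mem_permutations; have ul : uniq (lw s).
  rewrite /lw /mkseq map_inj_in_uniq ?iota_uniq // => x y.
  rewrite !mem_iota !add0n => hx hy.
  rewrite -[x]/(val (Ordinal hx)) -[y]/(val (Ordinal hy)) !pvalE => /val_inj/perm_inj.
  by case.
have sub : {subset lw s <= iota 0 n}.
  move=> x /mapP[j]; rewrite mem_iota add0n => /= hj ->.
  by rewrite mem_iota add0n -[j]/(val (Ordinal hj)) pvalE ltn_ord.
apply: uniq_perm => //; first exact: iota_uniq.
have hs : size (iota 0 n) <= size (lw s) by rewrite size_iota size_lw.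
by have [_ e] := uniq_min_size ul sub hs.
Qed.

Lemma lw_inj n : injective (@lw n).
Proof.
move=> s t e; apply/permP => i; apply/val_inj.
by rewrite -!pvalE !pval_nth e.
Qed.

Lemma card_perms n (Q : pred 'S_n) (P : pred (seq nat)) :
  (forall s, Q s = P (lw s)) -> #|[set s | Q s]| = count P (perms n).
Proof.
move=> QP; rewrite card_count (eq_count QP) -(count_map (@lw n) P).
have H : perm_eq (map (@lw n) (enum 'S_n)) (perms n).
  have u1 : uniq (map (@lw n) (enum 'S_n)) by rewrite map_inj_uniq ?enum_uniq //; exact: lw_inj.
  apply: uniq_perm => //; first exact: permutations_uniq.
  have sub : {subset map (@lw n) (enum 'S_n) <= perms n}.
    by move=> w /mapP[s _ ->]; exact: lw_perm.
  have hs : size (perms n) <= size (map (@lw n) (enum 'S_n)).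
    by rewrite size_map -cardE card_Sn /perms size_permutations ?iota_uniq ?size_iota.
  by have [_ e] := uniq_min_size u1 sub hs.
by rewrite (seq.permP H).
Qed.

Section Main.
Variable I : seq nat.
Variable m : nat.
Hypothesis Hm : 0 < m.
Hypothesis HmI : m \in I.
Hypothesis HI : forall i, i \in I -> 0 < i <= m.

Definition desc (w : seq nat) j := nth 0 w j < nth 0 w j.-1.
Definition DesL (w : seq nat) :=
  let D := [seq i <- iota 1 (size w).-1 | desc w i] in
  all (fun i => i \in I) D && all (fun i => i \in D) I.

Lemma DesEqE n (s : 'S_n) : DesEq s I = DesL (lw s).
Proof.
rewrite /DesEq /DesL /Des size_lw.
have -> : [seq i <- iota 1 n.-1 | Defs.pi s i.+1 < Defs.pi s i] =
          [seq i <- iota 1 n.-1 | desc (lw s) i].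
  by apply: eq_filter => i; rewrite /Defs.pi /desc /= ltnS !pval_nth.
by [].
Qed.

Lemma DesLE w : m < size w ->
  DesL w = all (fun j => desc w j == (j \in I)) (iota 1 (size w).-1).
Proof.
move=> hw; rewrite /DesL; apply/andP/idP.
- case=> H1 H2; apply/allP => j hj; apply/eqP; case dj: (desc w j).
  + by apply/esym/(allP H1); rewrite mem_filter dj.
  + apply/esym/negbTE/negP => jI; have := allP H2 _ jI; by rewrite mem_filter dj.
- move=> H; split; apply/allP => j.
  + rewrite mem_filter => /andP[dj hj]; by have := allP H _ hj; rewrite dj => /eqP <-.
  + move=> jI; have hj : j \in iota 1 (size w).-1.
      by rewrite mem_iota; have := HI jI; lia.
    rewrite mem_filter hj andbT; by have := allP H _ hj; rewrite jI => /eqP.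
Qed.

Definition sortc n (p : seq nat) := [seq x <- iota 0 n | x \notin p].
Definition U n := undup [seq take m w | w <- perms n].

Lemma perm_catc n p : uniq p -> all (fun x => x < n) p ->
  perm_eq (p ++ sortc n p) (iota 0 n).
Proof.
move=> up ap; apply: uniq_perm.
- rewrite cat_uniq up filter_uniq ?iota_uniq // andbT.
  by apply/hasPn => x; rewrite mem_filter => /andP[].
- exact: iota_uniq.
move=> x; rewrite mem_cat mem_filter mem_iota add0n leq0n /=.
by case xp: (x \in p) => //=; rewrite (allP ap x xp).
Qed.

Lemma memU n p : m <= n ->
  (p \in U n) = [&& uniq p, size p == m & all (fun x => x < n) p].
Proof.
move=> hmn; rewrite mem_undup; apply/mapP/idP.
- case=> w; rewrite mem_permutations => pw ->.
  have sw : size w = n by rewrite (perm_size pw) size_iota.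
  have uw : uniq w by rewrite (perm_uniq pw) iota_uniq.
  rewrite take_uniq // size_takel ?sw // eqxx /=.
  by apply/allP => x /mem_take; rewrite (perm_mem pw) mem_iota.
- case/and3P => up /eqP sp ap; exists (p ++ sortc n p).
    by rewrite mem_permutations perm_catc.
  by rewrite take_size_cat.
Qed.

Lemma Ered n (P : pred (seq nat)) : m < n -> (forall w, P w -> DesL w) ->
  count P (perms n) = count (fun p => P (p ++ sortc n p)) (U n).
Proof.
move=> hmn PD.
apply: (count_bij (f := take m) (g := fun p => p ++ sortc n p));
  [exact: permutations_uniq | exact: undup_uniq | |].
- move=> w; rewrite mem_permutations => pw Pw.
  have key : take m w ++ sortc n (take m w) = w.
    have sw : size w = n by rewrite (perm_size pw) size_iota.
    have uw : uniq w by rewrite (perm_uniq pw) iota_uniq.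
    have Dw := PD _ Pw; rewrite DesLE ?sw // in Dw.
    rewrite -[in RHS](cat_take_drop m w); congr (_ ++ _).
    apply: (irr_sorted_eq ltn_trans ltnn).
    + exact: (sorted_filter ltn_trans _ (iota_ltn_sorted 0 n)).
    + apply/(sortedP 0) => i; rewrite size_drop sw => hi; rewrite !nth_drop.
      have hj : m + i.+1 \in iota 1 n.-1 by rewrite mem_iota; lia.
      have := allP Dw _ hj.
      have jI : (m + i.+1 \in I) = false.
        by apply/negbTE/negP => /HI; lia.
      rewrite jI /desc addnS /= => /eqP/negbT; rewrite -leqNgt => hle.
      have hne : nth 0 w (m + i) != nth 0 w (m + i).+1.
        by rewrite nth_uniq ?sw //; lia.
      by rewrite ltn_neqAle hne hle.
    + move=> x; rewrite mem_filter mem_iota add0n /=.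
      have := uw; rewrite -{1}(cat_take_drop m w) cat_uniq => /and3P[_ hd _].
      have xw : (x < n) = (x \in take m w) || (x \in drop m w).
        by rewrite -mem_cat cat_take_drop (perm_mem pw) mem_iota.
      case xd: (x \in drop m w).
      * have xt : x \notin take m w by apply: (hasPn hd).
        by rewrite xt xw xd orbT.
      * apply/negbTE/andP => [[xt]]; by rewrite xw xd orbF (negbTE xt).
  rewrite key Pw; split => //.
  by rewrite mem_undup; apply/mapP; exists w; rewrite ?mem_permutations.
- move=> p; rewrite memU ?(ltnW hmn) // => /and3P[up /eqP sp ap] Pp; split => //.
    by rewrite mem_permutations perm_catc.
  by rewrite take_size_cat.
Qed.

Definition Vc (p : seq nat) :=
  all (fun j => desc p j == (j \in I)) (iota 1 m.-1) &&
  has (fun v => v \notin p) (iota 0 (nth 0 p m.-1)).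

Lemma charV n p : m < n -> uniq p -> size p = m -> all (fun x => x < n) p ->
  DesL (p ++ sortc n p) = Vc p.
Proof.
move=> hmn up sp ap.
have sc : size (sortc n p) = n - m.
  by have := perm_size (perm_catc up ap); rewrite size_cat size_iota sp; lia.
have sw : size (p ++ sortc n p) = n by rewrite size_cat sp sc; lia.
have sortc_s : sorted ltn (sortc n p) by exact: (sorted_filter ltn_trans _ (iota_ltn_sorted 0 n)).
rewrite DesLE sw; last by lia.
have -> : n.-1 = m.-1 + (1 + (n - m).-1) by lia.
rewrite iotaD iotaD !all_cat (_ : 1 + m.-1 = m); last by lia.
have h1 : all (fun j => desc (p ++ sortc n p) j == (j \in I)) (iota 1 m.-1) =
          all (fun j => desc p j == (j \in I)) (iota 1 m.-1).
  apply: eq_in_all => j; rewrite mem_iota => hj.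
  have a1 : j < m by lia.
  have a2 : j.-1 < m by lia.
  by rewrite /desc !nth_cat sp a1 a2.
have h3 : all (fun j => desc (p ++ sortc n p) j == (j \in I)) (iota (m + 1) (n - m).-1).
  apply/allP => j; rewrite mem_iota => hj.
  have jI : (j \in I) = false by apply/negbTE/negP => /HI; lia.
  have a1 : (j < m) = false by apply/negbTE; rewrite -leqNgt; lia.
  have a2 : (j.-1 < m) = false by apply/negbTE; rewrite -leqNgt; lia.
  rewrite jI /desc !nth_cat sp a1 a2.
  rewrite eqbF_neg -leqNgt ltnW //; apply: (sorted_ltn_nth ltn_trans 0 sortc_s); rewrite ?inE ?sc; lia.
rewrite h1 h3 andbT /= andbT HmI eqb_id /Vc; congr (_ && _).
have a1 : m.-1 < m by lia.
rewrite /desc nth_cat sp ltnn subnn nth_cat sp a1.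
have lp : nth 0 p m.-1 \in p by rewrite mem_nth // sp; lia.
apply/idP/hasP.
- move=> H; exists (nth 0 (sortc n p) 0); first by rewrite mem_iota.
  have : nth 0 (sortc n p) 0 \in sortc n p by rewrite mem_nth // sc; lia.
  by rewrite mem_filter => /andP[].
- case=> v; rewrite mem_iota add0n leq0n /= => hv vp.
  have vc : v \in sortc n p.
    rewrite mem_filter vp mem_iota add0n leq0n /=.
    by apply: (ltn_trans hv); exact: (allP ap).
  apply: (leq_trans _ hv); rewrite ltnS.
  rewrite -[X in _ <= X](nth_index 0 vc).
  apply: (sorted_leq_nth leq_trans leqnn 0 _); rewrite ?inE ?index_mem //.
    exact: (sorted_filter leq_trans _ (iota_sorted 0 n)).
  by rewrite sc; lia.
Qed.

Lemma PH q : uniq q -> size q = m -> forall x, x \in q -> m <= x ->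
  has (fun v => v \notin q) (iota 0 m).
Proof.
move=> uq sq x xq hx; case: (boolP (has _ _)) => // /hasPn H.
have sub : {subset iota 0 m <= q} by move=> v /H; rewrite negbK.
have hs : size q <= size (iota 0 m) by rewrite sq size_iota.
have [_ e] := uniq_min_size (iota_uniq 0 m) sub hs.
by move: xq; rewrite -e mem_iota; lia.
Qed.

Lemma PH0 q : uniq q -> size q = m -> all (fun x => x < m) q ->
  forall v, v < m -> v \in q.
Proof.
move=> uq sq aq v hv.
have sub : {subset q <= iota 0 m} by move=> x /(allP aq); rewrite mem_iota.
have hs : size (iota 0 m) <= size q by rewrite sq size_iota.
have [_ e] := uniq_min_size uq sub hs.
by rewrite e mem_iota.
Qed.

Lemma relabel p f : uniq p -> size p = m ->
  {in p, forall x, x < m -> f x = x} -> {in p, forall x, m <= x -> m <= f x} ->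
  {in p &, forall x y, (f x < f y) = (x < y)} -> Vc (map f p) = Vc p.
Proof.
move=> up sp f1 f2 f3.
have fin : {in p &, injective f}.
  move=> x y xp yp e; case: (ltngtP x y) => // h.
    by have := f3 x y xp yp; rewrite h e ltnn.
  by have := f3 y x yp xp; rewrite h e ltnn.
have uq : uniq (map f p) by rewrite map_inj_in_uniq.
have sq : size (map f p) = m by rewrite size_map.
have small : forall v, v < m -> (v \in map f p) = (v \in p).
  move=> v hv; apply/mapP/idP => [[y yp e]|vp]; last by exists v; rewrite // f1.
  case: (ltnP y m) => hy; first by rewrite e f1.
  by have := f2 _ yp hy; lia.
have nthf : forall j, j < m -> nth 0 (map f p) j = f (nth 0 p j).
  by move=> j hj; rewrite (nth_map 0) // sp.
have mem_n : forall j, j < m -> nth 0 p j \in p by move=> j hj; rewrite mem_nth // sp.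
have A : forall q y, uniq q -> size q = m -> y \in q -> m <= y ->
    has (fun v => v \notin q) (iota 0 y).
  move=> q y uq' sq' yq hy; have /hasP[v] := PH uq' sq' yq hy.
  by rewrite mem_iota => hv vq; apply/hasP; exists v => //; rewrite mem_iota; lia.
rewrite /Vc; congr (_ && _).
- apply: eq_in_all => j; rewrite mem_iota => hj.
  have a1 : j < m by lia.
  have a2 : j.-1 < m by lia.
  by rewrite /desc !nthf // f3 // mem_n.
- have hl : m.-1 < m by lia.
  rewrite nthf //; have xp := mem_n _ hl; move: xp.
  set x := nth 0 p m.-1 => xp.
  case: (ltnP x m) => hx.
  + rewrite f1 //; apply: eq_in_has => v; rewrite mem_iota => hv; rewrite small //; lia.
  + have hfx := f2 _ xp hx.
    by rewrite (A _ _ uq sq) ?(A _ _ up sp) //; apply/mapP; exists x.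
Qed.

Definition LS n (p L : seq nat) := all (fun u => (u \in p) == (u \in L)) (iota m (n - m)).

Lemma LS_mem n p L : LS n p L -> all (fun x => x < n) p -> all (fun x => x < n) L ->
  forall u, m <= u -> (u \in p) = (u \in L).
Proof.
move=> H ap aL u hu; case: (ltnP u n) => hn.
  by apply/eqP; apply: (allP H); rewrite mem_iota; lia.
by apply/idP/idP => [/(allP ap)|/(allP aL)]; lia.
Qed.

Lemma LS_intro n p L : (forall u, m <= u -> (u \in p) = (u \in L)) -> LS n p L.
Proof. by move=> H; apply/allP => u; rewrite mem_iota => /andP[hu _]; rewrite H. Qed.

Lemma idx_mono (L : seq nat) x y : sorted ltn L -> x \in L -> y \in L ->
  (index x L < index y L) = (x < y).
Proof.
move=> sL xL yL; apply/idP/idP => [|hxy]; first exact: (sorted_ltn_index ltn_trans sL).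
rewrite ltnNge; apply/negP; rewrite leq_eqVlt => /orP[/eqP e|H].
  have : nth 0 L (index y L) = nth 0 L (index x L) by rewrite e.
  by rewrite !nth_index // => e'; lia.
by have := sorted_ltn_index ltn_trans sL y x yL xL H; lia.
Qed.

Lemma nth_mono (L : seq nat) i j : sorted ltn L -> i < size L -> j < size L ->
  (nth 0 L i < nth 0 L j) = (i < j).
Proof.
move=> sL hi hj; apply/idP/idP => [H|]; last exact: (sorted_ltn_nth ltn_trans 0 sL).
rewrite ltnNge; apply/negP; rewrite leq_eqVlt => /orP[/eqP e|h].
  by rewrite e ltnn in H.
by have := sorted_ltn_nth ltn_trans 0 sL j i hj hi h; lia.
Qed.

Definition A k := count (fun p => Vc p && LS (m + m) p (iota m k)) (U (m + m)).


Definition cLf (L : seq nat) x := if x < m then x else m + index x L.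
Definition eLf (L : seq nat) y := if y < m then y else nth 0 L (y - m).

Lemma countL n L : m < n -> subseq L (iota m (n - m)) ->
  count (fun p => Vc p && LS n p L) (U n) = if size L <= m then A (size L) else 0.
Proof.
move=> hmn sub.
have uL : uniq L := subseq_uniq sub (iota_uniq _ _).
have sL : sorted ltn L := subseq_sorted ltn_trans sub (iota_ltn_sorted _ _).
have bL1 : forall u, u \in L -> m <= u.
  by move=> u /(mem_subseq sub); rewrite mem_iota => /andP[].
have bL2 : forall u, u \in L -> u < n.
  by move=> u /(mem_subseq sub); rewrite mem_iota => /andP[_]; rewrite subnKC // ltnW.
have aL : all (fun x => x < n) L by apply/allP => u /bL2.
case: leqP => hk; last first.
  apply/eqP; rewrite -leqn0 leqNgt -has_count; apply/hasPn => p.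
  rewrite memU ?(ltnW hmn) // => /and3P[up /eqP sp ap]; apply/negP => /andP[_ hLS].
  have sub' : {subset L <= p}.
    by move=> u uL0; rewrite (LS_mem hLS ap aL (bL1 _ uL0)).
  by have := uniq_leq_size uL sub'; rewrite sp leqNgt hk.
set k := size L.
have aI : all (fun x => x < m + m) (iota m k).
  by apply/allP => u; rewrite mem_iota => /andP[_ h]; apply: leq_trans h _; rewrite leq_add2l.
apply: (count_bij (f := map (cLf L)) (g := map (eLf L))); [exact: undup_uniq | exact: undup_uniq | |].
- move=> p; rewrite memU ?(ltnW hmn) // => /and3P[up /eqP sp ap] /andP[Vp hLS].
  have LSp := LS_mem hLS ap aL.
  have ixk : forall x, x \in p -> m <= x -> index x L < k.
    by move=> x xp hx; rewrite index_mem -LSp.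
  have ec : {in p, forall x, (eLf L) ((cLf L) x) = x}.
    move=> x xp; rewrite /cLf /eLf; case: (ltnP x m) => hx; first by rewrite hx.
    by rewrite ltnNge leq_addr /= addKn nth_index // -LSp.
  have inj : {in p &, injective (cLf L)}.
    by move=> x y xp yp e; rewrite -(ec x xp) -(ec y yp) e.
  have c1 : {in p, forall x, x < m -> (cLf L) x = x} by move=> x _ hx; rewrite /cLf hx.
  have c2 : {in p, forall x, m <= x -> m <= (cLf L) x}.
    by move=> x _ hx; rewrite /cLf ltnNge hx /= leq_addr.
  have mono : {in p &, forall x y, ((cLf L) x < (cLf L) y) = (x < y)}.
    move=> x y xp yp; rewrite /cLf; case: (ltnP x m) => hx; case: (ltnP y m) => hy //.
    + by rewrite ltn_addr // (leq_trans hx hy).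
    + rewrite !ltnNge (leq_trans (ltnW hy) (leq_addr _ _)) //.
      by rewrite (leq_trans (ltnW hy) hx).
    + by rewrite ltn_add2l idx_mono // -LSp.
  split.
  + rewrite memU; last by rewrite leq_addr.
    rewrite (map_inj_in_uniq inj) up size_map sp eqxx /=.
    apply/allP => _ /mapP[x xp ->]; rewrite /cLf; case: (ltnP x m) => hx.
      exact: ltn_addr.
    by rewrite ltn_add2l (leq_trans (ixk x xp hx)).
  + rewrite relabel // Vp /=; apply: LS_intro => u hu; apply/mapP/idP.
    * case=> x xp eu; move: hu; rewrite eu /cLf mem_iota; case: (ltnP x m) => hx hu.
        by move: hu; rewrite leqNgt hx.
      by rewrite leq_addr ltn_add2l ixk.
    * rewrite mem_iota => hu2.
      have hu3 : u - m < k by case/andP: hu2 => h1 h2; rewrite ltn_subLR.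
      have hn : nth 0 L (u - m) \in L by rewrite mem_nth.
      exists (nth 0 L (u - m)); first by rewrite LSp // bL1.
      by rewrite /cLf ltnNge bL1 //= index_uniq // subnKC //; case/andP: hu2.
  + by rewrite -map_comp map_id_in.
- move=> q; rewrite memU; last by rewrite leq_addr.
  move=> /and3P[uq /eqP sq aq] /andP[Vq hLS].
  have LSq := LS_mem hLS aq aI.
  have qk : forall y, y \in q -> m <= y -> y - m < k.
    by move=> y yq hy; move: (yq); rewrite LSq // mem_iota => /andP[_ h]; rewrite ltn_subLR.
  have hnL : forall y, y \in q -> m <= y -> nth 0 L (y - m) \in L.
    by move=> y yq hy; rewrite mem_nth // qk.
  have ce : {in q, forall y, (cLf L) ((eLf L) y) = y}.
    move=> y yq; rewrite /cLf /eLf; case: (ltnP y m) => hy; first by rewrite hy.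
    by rewrite ltnNge bL1 ?hnL //= index_uniq ?qk // subnKC.
  have inj : {in q &, injective (eLf L)}.
    by move=> x y xp yp e; rewrite -(ce x xp) -(ce y yp) e.
  have e1 : {in q, forall x, x < m -> (eLf L) x = x} by move=> x _ hx; rewrite /eLf hx.
  have e2 : {in q, forall x, m <= x -> m <= (eLf L) x}.
    by move=> x xq hx; rewrite /eLf ltnNge hx /= bL1 ?hnL.
  have mono : {in q &, forall x y, ((eLf L) x < (eLf L) y) = (x < y)}.
    move=> x y xq yq; rewrite /eLf; case: (ltnP x m) => hx; case: (ltnP y m) => hy //.
    + have h := bL1 _ (hnL y yq hy); by rewrite (leq_trans hx h) (leq_trans hx hy).
    + have h := bL1 _ (hnL x xq hx).
      by rewrite !ltnNge (leq_trans (ltnW hy) h) (leq_trans (ltnW hy) hx).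
    + by rewrite nth_mono ?qk // ltn_sub2rE.
  split.
  + rewrite memU ?(ltnW hmn) //.
    rewrite (map_inj_in_uniq inj) uq size_map sq eqxx /=.
    apply/allP => _ /mapP[y yq ->]; rewrite /eLf; case: (ltnP y m) => hy.
      exact: ltn_trans hy hmn.
    exact: bL2 (hnL y yq hy).
  + rewrite relabel // Vq /=; apply: LS_intro => u hu; apply/mapP/idP.
    * case=> y yq eu; move: hu; rewrite eu /eLf; case: (ltnP y m) => hy hu.
        by move: hu; rewrite leqNgt hy.
      exact: hnL.
    * move=> uL0; exists (m + index u L).
        by rewrite LSq ?leq_addr // mem_iota leq_addr /= ltn_add2l index_mem.
      by rewrite /eLf ltnNge leq_addr /= addKn nth_index.
  + by rewrite -map_comp map_id_in.
Qed.

Lemma count_decomp n (P : pred (seq nat)) : m < n ->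
  count P (U n) = \sum_(L <- subs (iota m (n - m))) count (fun p => P p && LS n p L) (U n).
Proof.
move=> hmn; set S := iota m (n - m).
rewrite count_sumE [RHS](eq_bigr (fun L => \sum_(p <- U n) (P p && LS n p L))); last first.
  by move=> L _; rewrite count_sumE.
rewrite exchange_big /= big_seq [RHS]big_seq; apply: eq_bigr => p pU.
rewrite memU ?(ltnW hmn) // in pU; case/and3P: pU => up /eqP sp ap.
case: (P p) => /=; last by rewrite big1.
rewrite -(count_sumE (fun L => LS n p L)).
set L0 := [seq u <- S | u \in p].
have L0s : L0 \in subs S by rewrite mem_subs filter_subseq.
have uS : uniq S by exact: iota_uniq.
rewrite (@eq_in_count _ _ (pred1 L0)) ?count_uniq_mem ?subs_uniq ?L0s //.
move=> L; rewrite mem_subs => sLS /=.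
apply/idP/eqP => [H|->].
- move/(subseq_uniqP uS): sLS => ->; rewrite /L0; apply: eq_in_filter => u uS'.
  by rewrite (eqP (allP H u uS')).
- by apply/allP => u uS'; rewrite /L0 mem_filter uS' andbT.
Qed.

Lemma sum_subs (S : seq nat) (F : nat -> nat) :
  \sum_(L <- subs S) (if size L <= m then F (size L) else 0) =
  \sum_(k < m.+1) F k * 'C(size S, k).
Proof.
transitivity (\sum_(L <- subs S) \sum_(k < m.+1) (size L == k) * F k).
  apply: eq_bigr => L _; case: leqP => h.
    have h' : size L < m.+1 by rewrite ltnS.
    rewrite (bigD1 (Ordinal h')) //= eqxx mul1n big1 ?addn0 // => k hk.
    have : size L != k by apply: contra hk => /eqP e; apply/eqP/val_inj.
    by move/negbTE ->.
  rewrite big1 // => k _.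
  have -> : (size L == k) = false.
    by apply/negbTE; rewrite neq_ltn (leq_trans (ltn_ord k) h) orbT.
  by [].
rewrite exchange_big; apply: eq_bigr => k _.
by rewrite -big_distrl /= -(count_sumE (fun L => size L == k)) count_subs mulnC.
Qed.

Definition condk k (w : seq nat) :=
  all (fun v => (v \in [seq (nth 0 w j.-1).+1 | j <- iota 1 m]) == (v \in iota m.+1 k))
      (iota m.+1 m).

Lemma aA k : maxI I = m -> a I k = A k.
Proof.
move=> em; rewrite /a em.
rewrite (@card_perms _ _ (fun w => DesL w && condk k w)); last first.
  move=> s; rewrite DesEqE /condk.
  have -> : [seq Defs.pi s j | j <- iota 1 m] = [seq (nth 0 (lw s) j.-1).+1 | j <- iota 1 m].
    by apply: eq_map => j; rewrite /Defs.pi pval_nth.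
  by [].
have hmm : m < m + m by rewrite -{1}(addn0 m) ltn_add2l.
rewrite (Ered hmm); last by move=> w /andP[].
apply: eq_in_count => p; rewrite memU ?leq_addr // => /and3P[up /eqP sp ap] /=.
rewrite charV //; congr (_ && _).
rewrite /condk /LS addKn.
have e1 : [seq (nth 0 (p ++ sortc (m + m) p) j.-1).+1 | j <- iota 1 m] = map succn p.
  rewrite (iotaDl 1 0) -map_comp -[in RHS](mkseq_nth 0 p) sp /mkseq -map_comp.
  apply/eq_in_map => j; rewrite mem_iota add0n => /andP[_ hj] /=.
  by rewrite add0n nth_cat sp hj.
have e2 : iota m.+1 m = map succn (iota m m) by exact: (iotaDl 1 m m).
rewrite e1 e2 all_map.
apply: eq_all => u /=.
by rewrite (mem_map succn_inj) !mem_iota ltnS addSn ltnS.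
Qed.

Lemma A0 : A 0 = 0.
Proof.
apply/eqP; rewrite -leqn0 leqNgt -has_count; apply/hasPn => p.
rewrite memU ?leq_addr // => /and3P[up /eqP sp ap].
apply/negP => /andP[/andP[_ /hasP[v hv vp]] hLS].
move: hv; rewrite mem_iota add0n leq0n /= => hv.
have small : all (fun x => x < m) p.
  apply/allP => x xp; rewrite ltnNge; apply/negP => hx.
  by have := LS_mem hLS ap isT hx; rewrite xp.
have hl : nth 0 p m.-1 < m.
  apply: (allP small); rewrite mem_nth // sp prednK //.
have := PH0 up sp small (ltn_trans hv hl).
by rewrite (negbTE vp).
Qed.

Fixpoint mk t := if t is t'.+1 then
   (if (t' \in I) && (0 < t') then rcons (map succn (mk t')) 0 else rcons (mk t') t')
  else [::].

Lemma mk_props t : [/\ size (mk t) = t, uniq (mk t), all (fun x => x < t) (mk t) &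
  forall j, 0 < j < t -> desc (mk t) j = (j \in I)].
Proof.
elim: t => [|t [s1 u1 a1 d1]] /=; first by split => // j; rewrite ltn0 andbF.
case: ifP => hc; split.
- by rewrite size_rcons size_map s1.
- rewrite rcons_uniq map_inj_uniq ?u1 ?andbT //; last exact: succn_inj.
  by apply/mapP => [[x _]].
- rewrite all_rcons /=; apply/allP => _ /mapP[x xs ->]; rewrite ltnS; exact: (allP a1 _ xs).
- move=> j hj; rewrite /desc !nth_rcons size_map s1.
  have [jt|jt|ej] := ltngtP j t.
  + have j1 : j.-1 < t by apply: leq_ltn_trans (leq_pred j) jt.
    rewrite j1 !(nth_map 0) ?s1 // ltnS; apply: d1.
    by case/andP: hj => -> _.
  + by case/andP: hj => _; rewrite ltnS leqNgt jt.
  + rewrite ej ?ltnn ?eqxx.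
    have j1 : t.-1 < t by rewrite prednK // -ej; case/andP: hj.
    by rewrite j1 (nth_map 0) ?s1 //; case/andP: hc => ->.
- by rewrite size_rcons s1.
- rewrite rcons_uniq u1 andbT; apply/negP => /(allP a1); by rewrite ltnn.
- rewrite all_rcons ltnSn /=; apply/allP => x /(allP a1) /ltnW; by [].
- move=> j hj; rewrite /desc !nth_rcons s1.
  have [jt|jt|ej] := ltngtP j t.
  + have j1 : j.-1 < t by apply: leq_ltn_trans (leq_pred j) jt.
    rewrite j1; apply: d1; by case/andP: hj => -> _.
  + by case/andP: hj => _; rewrite ltnS leqNgt jt.
  + rewrite ej ?ltnn ?eqxx.
    have t0 : 0 < t by rewrite -ej; case/andP: hj.
    have j1 : t.-1 < t by rewrite prednK.
    rewrite j1; rewrite t0 andbT in hc; rewrite hc.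
    apply/negbTE; rewrite -leqNgt ltnW //; apply: (allP a1); by rewrite mem_nth ?s1.
Qed.

Lemma Apos k : 0 < k <= m -> 0 < A k.
Proof.
case/andP => k0 km.
have [s1 u1 a1 d1] := mk_props m.
have sub : {subset mk m <= iota 0 m} by move=> x /(allP a1); rewrite mem_iota.
have hs : size (iota 0 m) <= size (mk m) by rewrite size_iota s1.
have [_ e] := uniq_min_size u1 sub hs.
rewrite /A -has_count; apply/hasP; exists (map (addn k) (mk m)).
  rewrite memU ?leq_addr // map_inj_uniq ?u1 /=; last exact: addnI.
  rewrite size_map s1 eqxx /=; apply/allP => _ /mapP[x xm ->].
  have := allP a1 _ xm; lia.
apply/andP; split.
- rewrite /Vc; apply/andP; split.
  + apply/allP => j; rewrite mem_iota => hj.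
    have a2 : j < m by lia.
    have a3 : j.-1 < m by lia.
    rewrite /desc !(nth_map 0) ?s1 // ltn_add2l.
    have hj' : 0 < j < m by lia.
    by have := d1 j hj'; rewrite /desc => ->.
  + apply/hasP; exists 0.
      by rewrite mem_iota (nth_map 0) ?s1; lia.
    by apply/mapP => [[x _]]; lia.
- apply: LS_intro => u hu; apply/mapP/idP => [[x xm eu]|hu2].
    by rewrite eu mem_iota; have := allP a1 _ xm; lia.
  exists (u - k).
    by rewrite e mem_iota; move: hu2; rewrite mem_iota; lia.
  by move: hu2; rewrite mem_iota; lia.
Qed.

Lemma main_sec (em : maxI I = m) :
  a I 0 = 0 /\
  (forall n : nat, m < n -> d I n = \sum_(k < m.+1) a I k * 'C(n - m, k)) /\
  (forall k : nat, 1 <= k <= m -> 0 < a I k).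
Proof.
split; first by rewrite aA // A0.
split; last by move=> k hk; rewrite aA // Apos.
move=> n hn.
rewrite /d (@card_perms _ _ DesL); last by move=> s; rewrite DesEqE.
rewrite (Ered hn) //.
rewrite (@eq_in_count _ _ Vc); last first.
  by move=> p; rewrite memU ?(ltnW hn) // => /and3P[up /eqP sp ap]; rewrite charV.
rewrite (count_decomp _ hn) big_seq.
rewrite (eq_bigr (fun L => if size L <= m then A (size L) else 0)); last first.
  by move=> L; rewrite mem_subs => sL; rewrite countL.
rewrite -big_seq sum_subs size_iota; apply: eq_bigr => k _; by rewrite aA.
Qed.

End Main.

Lemma maxI_mem (I : seq nat) : I != [::] -> maxI I \in I.
Proof.
rewrite /maxI; elim: I => // x s IH _; rewrite big_cons.
case: s IH => [|y s] IH; first by rewrite big_nil maxn0 mem_head.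
have := IH isT; set M := \max_(i <- _) i => hM.
rewrite /maxn; case: ltnP => _; first by rewrite inE hM orbT.
by rewrite mem_head.
Qed.

Theorem theorem3p3 (I : seq nat) (Ipos : all (fun i => 0 < i) I)
    (Ine : I != [::]) :
  a I 0 = 0 /\
  (forall n : nat, maxI I < n ->
     d I n = \sum_(k < (maxI I).+1) a I k * 'C(n - maxI I, k)) /\
  (forall k : nat, 1 <= k <= maxI I -> 0 < a I k).
Proof.
have mI := maxI_mem Ine.
have HI : forall i, i \in I -> 0 < i <= maxI I.
  move=> i iI; rewrite (allP Ipos _ iI) /=.
  exact: (@leq_bigmax_seq _ I xpredT id i iI isT).
have Hm : 0 < maxI I by have := HI _ mI; case/andP.
exact: (main_sec Hm mI HI).
Qed.
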